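(* Let $\mathcal F\subseteq\mathcal G$ be two prime lattice filters of an MV-algebra $\mathcal L$. Then $$\mathcal F\sqsubseteq\!\!\to\mathcal G=J_u(\mathcal F,\mathcal K(\mathcal G))\sqsubseteq\!\!\to J_d(\mathcal G,\mathcal K(\mathcal F)).$$
   Context: $\mathcal L=(L,\oplus,\lnot,0)$ is an MV-algebra. We write $1=\lnot 0$, $x\otimes y=\lnot(\lnot x\oplus\lnot y)$, and $x\to y=\lnot x\oplus y$, and use the usual lattice order. A lattice filter is a nonempty upward-closed subset closed under $\wedge$. It is prime if it is proper and $a\vee b\in\mathcal F$ implies $a\in\mathcal F$ or $b\in\mathcal F$. For an upward-closed $\mathcal F$ and $a\in L$, let $\mathcal F_a=\{z: z\to a\notin\mathcal F\}$, $\mathcal F^+=\mathcal F_0$, and $\mathcal K(\mathcal F)=\{z : \forall a\notin\mathcal F,\ z\to a\notin\mathcal F\}$ (the kernel; it is an implication filter). An implication filter is a set $P\ni 1$ closed under modus ponens ($x, x\to y\in P\Rightarrow y\in P$). $\eta_P\colon\mathcal L\to\mathcal L/P$ is the canonical epimorphism onto the quotient by the congruence $x\sim_P y\iff x\to y,\ y\to x\in P$, and $X/P=\eta_P[X]$. We set $J_u(\mathcal F,P)=\eta_P^{-1}[\mathcal F/P]$ and $J_d(\mathcal F,P)=\big(J_u(\mathcal F^+,P)\big)^+$. For $\mathcal F\subseteq\mathcal G$ we put $\mathcal F\sqsubseteq\!\!\to\mathcal G=\bigcap_{a\in L\setminus\mathcal G}\mathcal F_a$, and in general $\mathcal F\sqsubseteq\!\!\to\mathcal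 G:=(\mathcal F\cap\mathcal G)\sqsubseteq\!\!\to\mathcal G$. *)

(* Defs.v *)
Set Implicit Arguments.

Record MVAlgebra := {
  mv_car :> Type;
  mv_oplus : mv_car -> mv_car -> mv_car;
  mv_neg : mv_car -> mv_car;
  mv_zero : mv_car;
  mv_assoc : forall x y z, mv_oplus x (mv_oplus y z) = mv_oplus (mv_oplus x y) z;
  mv_comm : forall x y, mv_oplus x y = mv_oplus y x;
  mv_zero_r : forall x, mv_oplus x mv_zero = x;
  mv_negK : forall x, mv_neg (mv_neg x) = x;
  mv_one_abs : forall x, mv_oplus x (mv_neg mv_zero) = mv_neg mv_zero;
  mv_luk : forall x y,
    mv_oplus (mv_neg (mv_oplus (mv_neg x) y)) y
    = mv_oplus (mv_neg (mv_oplus (mv_neg y) x)) x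
}.

Section MVDefs.
Unset Implicit Arguments.
Variable L : MVAlgebra.

Definition mv_one : L := mv_neg L (mv_zero L).
Definition mv_otimes (x y : L) : L :=
  mv_neg L (mv_oplus L (mv_neg L x) (mv_neg L y)).
Definition mv_imp (x y : L) : L := mv_oplus L (mv_neg L x) y.
Definition mv_le (x y : L) : Prop := mv_imp x y = mv_one.
Definition mv_meet (x y : L) : L := mv_otimes x (mv_imp x y).
Definition mv_join (x y : L) : L :=
  mv_oplus L (mv_neg L (mv_oplus L (mv_neg L x) y)) y.

Definition upward_closed (F : L -> Prop) : Prop :=
  forall x y, F x -> mv_le x y -> F y.

Definition lattice_filter (F : L -> Prop) : Prop :=
  (exists x, F x) /\ upward_closed F /\ (forall x y, F x -> F y -> F (mv_meet x y)).

Definition prime_lattice_filter (F : L -> Prop) : Prop :=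
  lattice_filter F /\ (exists x, ~ F x) /\
  (forall a b, F (mv_join a b) -> F a \/ F b).

Definition implication_filter (P : L -> Prop) : Prop :=
  P mv_one /\ (forall x y, P x -> P (mv_imp x y) -> P y).

Definition Fsub (F : L -> Prop) (a : L) : L -> Prop :=
  fun z => ~ F (mv_imp z a).
Definition Fplus (F : L -> Prop) : L -> Prop := Fsub F (mv_zero L).
Definition kernel (F : L -> Prop) : L -> Prop :=
  fun z => forall a, ~ F a -> ~ F (mv_imp z a).

(* congruence of an implication filter and the canonical epimorphism eta_P,
   realised as the map sending x to its equivalence class *)
Definition simP (P : L -> Prop) (x y : L) : Prop :=
  P (mv_imp x y) /\ P (mv_imp y x).
Definition etaP (P : L -> Prop) (x : L) : L -> Prop := simP P x.

Definition J_u (F P : L -> Prop) : L -> Prop :=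
  fun x => exists y, F y /\ etaP P y = etaP P x.
Definition J_d (F P : L -> Prop) : L -> Prop := Fplus (J_u (Fplus F) P).

(* F ⊑→ G := (F ∩ G) ⊑→ G = ⋂_{a ∉ G} (F ∩ G)_a *)
Definition imp_rel (F G : L -> Prop) : L -> Prop :=
  fun z => forall a, ~ G a -> Fsub (fun w => F w /\ G w) a z.

End MVDefs.

(* Main.v *)
Require Import Defs.
From Stdlib Require Import Classical.

Section Alg.
Variable L : MVAlgebra.
Local Notation "x + y" := (mv_oplus L x y).
Local Notation "- x" := (mv_neg L x).
Local Notation "0" := (mv_zero L).

Lemma zero_l (x : L) : 0 + x = x.
Proof. rewrite mv_comm. apply mv_zero_r. Qed.

Lemma compl (x : L) : - x + x = - 0.
Proof.
  pose proof (mv_luk L x (- 0)) as H.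
  rewrite mv_one_abs, mv_negK, zero_l in H. symmetry. exact H.
Qed.

Lemma one_l (x : L) : - 0 + x = - 0.
Proof. rewrite mv_comm. apply mv_one_abs. Qed.

Lemma imp_refl (x : L) : mv_imp L x x = mv_one L.
Proof. apply compl. Qed.

Lemma imp_one_l (x : L) : mv_imp L (mv_one L) x = x.
Proof. unfold mv_imp, mv_one. rewrite mv_negK. apply zero_l. Qed.

Lemma imp0K (x : L) : mv_imp L (mv_imp L x 0) 0 = x.
Proof. unfold mv_imp. rewrite !mv_zero_r, mv_negK. reflexivity. Qed.

End Alg.

Lemma kernel_one (L : MVAlgebra) (X : L -> Prop) : kernel L X (mv_one L).
Proof. intros a Ha. rewrite imp_one_l. exact Ha. Qed.

Lemma eta_sim (L : MVAlgebra) (P : L -> Prop) x y :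
  P (mv_one L) -> etaP L P y = etaP L P x -> simP L P x y.
Proof.
  intros H1 E. assert (S : simP L P y y) by (split; rewrite imp_refl; auto).
  change (etaP L P x y). rewrite <- E. exact S.
Qed.

Lemma ineq1 (L : MVAlgebra) (x y : L) :
  mv_le L x (mv_imp L (mv_imp L y (mv_imp L x (mv_zero L))) (mv_imp L y (mv_zero L))).
Proof.
  unfold mv_le, mv_imp, mv_one. rewrite !mv_zero_r.
  set (N := mv_neg L (mv_oplus L (mv_neg L y) (mv_neg L x))).
  rewrite (mv_comm L N), mv_assoc, (mv_comm L (mv_neg L x)), mv_comm. apply compl.
Qed.

Lemma ineq2 (L : MVAlgebra) (a v y z : L) :
  mv_le L y (mv_imp L (mv_imp L v (mv_imp L a (mv_zero L)))
     (mv_imp L z (mv_imp L (mv_imp L y (mv_imp L z a)) (mv_imp L v (mv_zero L))))).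
Proof.
  unfold mv_le, mv_imp, mv_one. rewrite !mv_zero_r.
  set (u := mv_oplus L (mv_neg L y) (mv_oplus L (mv_neg L z) a)).
  set (N := mv_neg L (mv_oplus L (mv_neg L v) (mv_neg L a))).
  set (nv := mv_neg L v). set (ny := mv_neg L y). set (nz := mv_neg L z).
  transitivity (mv_oplus L (mv_oplus L N nv) (mv_oplus L ny (mv_oplus L nz (mv_neg L u)))).
  { rewrite !mv_assoc. rewrite (mv_comm L ny N). rewrite <- !mv_assoc. f_equal.
    rewrite (mv_comm L (mv_neg L u) nv). rewrite !mv_assoc. rewrite (mv_comm L _ nv). rewrite !mv_assoc. reflexivity. }
  subst N. rewrite (mv_comm L (mv_neg L v) (mv_neg L a)). rewrite mv_luk. subst nv. rewrite mv_negK.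
  rewrite <- mv_assoc. rewrite <- (mv_one_abs L (mv_neg L (mv_oplus L v a))). f_equal.
  rewrite <- (compl L u). rewrite (mv_comm L (mv_neg L u)). subst u.
  rewrite !mv_assoc. f_equal. rewrite (mv_comm L a ny), <- mv_assoc, (mv_comm L a nz), mv_assoc. reflexivity.
Qed.

Theorem mainTheorem9 (L : MVAlgebra) (F G : L -> Prop) :
  prime_lattice_filter L F -> prime_lattice_filter L G ->
  (forall x, F x -> G x) ->
  forall z : L,
    imp_rel L F G z <->
    imp_rel L (J_u L F (kernel L G)) (J_d L G (kernel L F)) z.
Proof.
  intros [[_ [FU _]] _] [[_ [GU _]] _] FG z.
  split.
  - intros HL a Ba [[y [Fy Ey]] _].
    apply NNPP in Ba. destruct Ba as [v [Gv Ev]].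
    destruct (eta_sim _ _ _ _ (kernel_one L F) Ev) as [_ Kk].
    destruct (eta_sim _ _ _ _ (kernel_one L G) Ey) as [_ Km].
    apply Gv. apply NNPP; intro nGw.
    apply (HL _ (Km _ nGw)). split; [|apply FG];
    (apply NNPP; intro nF; apply (Kk _ nF); apply (FU y); [exact Fy| apply ineq2]).
  - intros HR a Ga [Fza Gza].
    apply (HR a).
    + intro Ba. apply Ba. exists (mv_imp L a (mv_zero L)). split; [|reflexivity].
      unfold Fplus, Fsub. rewrite imp0K. exact Ga.
    + split.
      * exists (mv_imp L z a). split; auto.
      * intros [y [Gy Ey]].
        destruct (eta_sim _ _ _ _ (kernel_one L F) Ey) as [_ Kk].
        apply Gy, FG. apply NNPP; intro nF. apply (Kk _ nF).
        apply (FU _ _ Fza). apply ineq1.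
Qed.
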